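(* Let $N\ge1$ and $\varphi,\psi\in\mathbb{C}^N$ be such that for $k=0,\ldots,2N-2$, $$\Big|P_\varphi\Big(\tfrac{k}{2N-1}\Big)\Big|=\Big|P_\psi\Big(\tfrac{k}{2N-1}\Big)\Big|$$ and $$\Big|P_\varphi\Big(\tfrac{k+1}{2N-1}\Big)-P_\varphi\Big(\tfrac{k}{2N-1}\Big)\Big|=\Big|P_\psi\Big(\tfrac{k+1}{2N-1}\Big)-P_\psi\Big(\tfrac{k}{2N-1}\Big)\Big|.$$ Then there exists $\lambda\in\mathbb{C}$ with $|\lambda|=1$ such that $\psi=\lambda\varphi$.
   Context: For $\psi=(\psi_0,\ldots,\psi_{N-1})\in\mathbb{C}^N$, $P_\psi(x)=\sum_{j=0}^{N-1}\psi_je^{2i\pi jx}$ for $x\in\mathbb{R}$ (a $1$-periodic function). *)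

(* Defs.v *)
From Stdlib Require Import Reals.
From Coquelicot Require Import Coquelicot.
Open Scope R_scope.

Definition cexp2pi (t : R) : C := (cos (2 * PI * t), sin (2 * PI * t)).

Fixpoint csum (n : nat) (f : nat -> C) : C :=
  match n with
  | O => 0%C
  | S m => Cplus (csum m f) (f m)
  end.

(* P_psi(x) = \sum_{j=0}^{N-1} psi_j e^{2 i pi j x}; a vector of C^N is
   represented by psi : nat -> C, of which only the entries j < N matter. *)
Definition Ptrig (N : nat) (psi : nat -> C) (x : R) : C :=
  csum N (fun j => Cmult (psi j) (cexp2pi (INR j * x))).

(* Main.v *)
Require Import Defs.
From Stdlib Require Import Reals Lra Lia ZArith.
From Coquelicot Require Import Coquelicot.
Open Scope R_scope.

Lemma cexp_add s t : cexp2pi (s + t) = Cmult (cexp2pi s) (cexp2pi t).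
Proof.
unfold cexp2pi, Cmult; simpl.
replace (2 * PI * (s + t)) with (2 * PI * s + 2 * PI * t); [|ring].
rewrite cos_plus, sin_plus. f_equal; ring.
Qed.

Lemma cexp_one : cexp2pi 1 = (1, 0).
Proof. unfold cexp2pi. rewrite Rmult_1_r, cos_2PI, sin_2PI. reflexivity. Qed.

Lemma cexp_norm t : let c := fst (cexp2pi t) in let s := snd (cexp2pi t) in
  c * c - s * - s = 1.
Proof.
simpl. pose proof (sin2_cos2 (2 * PI * t)) as H. unfold Rsqr in H. lra.
Qed.

Lemma sin_ne0 N d : (1 <= N)%nat -> (0 < d)%nat -> (d < 2 * N - 1)%nat ->
  sin (2 * PI * (INR d * / INR (2 * N - 1))) <> 0.
Proof.
intros HN Hd HdM Hs.
apply sin_eq_0_0 in Hs. destruct Hs as [k Hk].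
assert (HM : INR (2 * N - 1) > 0) by (apply lt_0_INR; lia).
assert (Hk2 : 2 * INR d = IZR k * INR (2 * N - 1)).
{ apply (Rmult_eq_reg_l PI); [|apply PI_neq0].
  replace (PI * (2 * INR d)) with ((2 * PI * (INR d * / INR (2 * N - 1))) * INR (2 * N - 1)).
  2:{ field. lra. }
  rewrite Hk. ring. }
rewrite !INR_IZR_INZ in Hk2.
rewrite <- mult_IZR, <- mult_IZR in Hk2. apply eq_IZR in Hk2.
rewrite Nat2Z.inj_sub in Hk2 by lia. rewrite Nat2Z.inj_mul in Hk2.
assert (0 < k)%Z by nia.
assert (k < 2)%Z by nia.
assert (k = 1)%Z by lia. subst k. lia.
Qed.

Lemma Cmod_sq z1 z2 : Cmod z1 = Cmod z2 ->
  fst z1 * fst z1 - snd z1 * - snd z1 = fst z2 * fst z2 - snd z2 * - snd z2.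
Proof.
unfold Cmod; intro H.
apply sqrt_inj in H; [| nra | nra]. simpl in H. nra.
Qed.

Lemma real_arith j k M : INR j * (INR k / INR M) = INR (k * j) * / INR M.
Proof. rewrite mult_INR. unfold Rdiv. ring. Qed.

Lemma Cmod_one a b : a * a - b * - b = 1 -> Cmod (a, b) = 1.
Proof.
intro H. unfold Cmod; simpl.
replace (a * (a * 1) + b * (b * 1)) with 1 by nra. apply sqrt_1.
Qed.
From HB Require Import structures.
From mathcomp Require Import all_boot all_algebra.
From mathcomp Require Import Rstruct complex.
From mathcomp Require Import ring zify.
Import GRing.Theory Num.Theory.
Local Open Scope ring_scope.
Definition K := (Rdefinitions.R)[i].
Definition cj (x : K) : K := conjc x.
Lemma cjD x y : cj (x + y) = cj x + cj y. Proof. exact: rmorphD. Qed.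
Lemma cjM x y : cj (x * y) = cj x * cj y. Proof. exact: rmorphM. Qed.
Lemma cjB x y : cj (x - y) = cj x - cj y. Proof. exact: rmorphB. Qed.
Lemma cjX x n : cj (x ^+ n) = cj x ^+ n. Proof. exact: rmorphXn. Qed.
Lemma cjK x : cj (cj x) = x. Proof. exact: conjcK. Qed.
Lemma cj0 : cj 0 = 0. Proof. exact: rmorph0. Qed.
Lemma cj_eq0 x : (cj x == 0) = (x == 0).
Proof. apply/eqP/eqP=> [h|->]; last exact: cj0. by rewrite -[x]cjK h cj0. Qed.
Lemma cjsum n (F : 'I_n -> K) : cj (\sum_(i < n) F i) = \sum_(i < n) cj (F i).
Proof. exact: rmorph_sum. Qed.

Definition Pv (N : nat) (v : nat -> K) : {poly K} := \poly_(j < N) v j.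
Definition Rv (N : nat) (v : nat -> K) : {poly K} := \poly_(j < N) cj (v (N.-1 - j)%N).
Definition Sv N v := Pv N v * Rv N v.
Definition wv (w : K) (v : nat -> K) := fun j => v j * w ^+ j.
Definition Tv N w v := Pv N (wv w v) * Rv N v + Pv N v * Rv N (wv w v).
Lemma Pv_eq0 N v : Pv N v = 0 <-> forall j, (j < N)%N -> v j = 0.
Proof.
split=> [h j hj|h].
  by have := congr1 (fun p : {poly K} => p`_j) h; rewrite /Pv coef_poly hj coef0.
by apply/polyP=> j; rewrite /Pv coef_poly coef0; case: ifP=> // /h.
Qed.

Lemma Rv_eq0 N v : Rv N v = 0 <-> forall j, (j < N)%N -> v j = 0.
Proof.
split=> [h j hj|h].
  have hj' : (N.-1 - j < N)%N by lia.
  have := congr1 (fun p : {poly K} => p`_(N.-1 - j)%N) h; rewrite /Rv coef_poly hj' coef0.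
  have -> : (N.-1 - (N.-1 - j) = j)%N by lia.
  by move/eqP; rewrite cj_eq0 => /eqP.
apply/polyP=> j; rewrite /Rv coef_poly coef0; case: ifP=> // hj.
by rewrite h ?cj0 //; lia.
Qed.

Lemma same_size (p q : {poly K}) : (forall j, (p`_j == 0) = (q`_j == 0)) -> size p = size q.
Proof.
move=> h; apply/eqP; rewrite eqn_leq; apply/andP; split; apply/leq_sizeP=> j hj; apply/eqP.
  by rewrite h; apply/eqP; move/leq_sizeP: (leqnn (size q)); apply.
by rewrite -h; apply/eqP; move/leq_sizeP: (leqnn (size p)); apply.
Qed.

Lemma size_Pw N w v : w != 0 -> size (Pv N (wv w v)) = size (Pv N v).
Proof.
move=> w0; apply: same_size=> j; rewrite /Pv !coef_poly; case: ifP=> // _.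
by rewrite /wv mulf_eq0 expf_eq0 (negbTE w0) andbF orbF.
Qed.

Lemma lead_Pw N w v : w != 0 ->
  lead_coef (Pv N (wv w v)) = lead_coef (Pv N v) * w ^+ (size (Pv N v)).-1.
Proof.
move=> w0; rewrite !lead_coefE size_Pw // /Pv !coef_poly; case: ifP=> //; by rewrite mul0r.
Qed.

Lemma size_Rw N w v : w != 0 -> size (Rv N (wv w v)) = size (Rv N v).
Proof.
move=> w0; apply: same_size=> j; rewrite /Rv !coef_poly; case: ifP=> // _.
by rewrite /wv cjM cjX mulf_eq0 expf_eq0 !cj_eq0 (negbTE w0) andbF orbF.
Qed.

Lemma lead_Rw N w v : w != 0 ->
  lead_coef (Rv N (wv w v)) = lead_coef (Rv N v) * cj w ^+ (N - size (Rv N v)).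
Proof.
move=> w0; rewrite !lead_coefE size_Rw //.
have [s0|sp] := eqVneq (size (Rv N v)) 0%N.
  have : Rv N v == 0 by rewrite -size_poly_eq0 s0.
  move/eqP=> h; have h2 : Rv N (wv w v) = 0.
    by apply/Rv_eq0=> j hj; rewrite /wv; move/Rv_eq0: h => ->; rewrite ?mul0r.
  by rewrite h h2 coef0 mul0r.
have sN : (size (Rv N v) <= N)%N by apply: size_poly.
rewrite /Rv !coef_poly; case: ifP=> hlt; last by rewrite mul0r.
rewrite /wv cjM cjX; congr (_ * _ ^+ _).
move: sp sN hlt; set s := size _; case: s => // s _ /=; case: N => // n.
Qed.
Lemma hornerPw N w v z : (Pv N (wv w v)).[z] = (Pv N v).[w * z].
Proof.
rewrite /Pv !horner_poly; apply: eq_bigr=> i _; by rewrite /wv exprMn mulrA.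
Qed.

Lemma hornerR N v z : z * cj z = 1 -> (Rv N v).[z] = z ^+ N.-1 * cj ((Pv N v).[z]).
Proof.
move=> hz; rewrite /Rv /Pv !horner_poly cjsum mulr_sumr.
rewrite (reindex_inj rev_ord_inj) /=; apply: eq_bigr=> i _.
have hi := ltn_ord i.
have -> : (N.-1 - (N - i.+1) = i)%N by lia.
rewrite cjM cjX mulrCA; congr (_ * _).
have -> : (N.-1 = (N - i.+1) + i)%N by lia.
by rewrite exprD -mulrA -exprMn hz expr1n mulr1.
Qed.

Lemma interp M (w : K) (p : {poly K}) :
  (forall i j, (i < M)%N -> (j < M)%N -> w ^+ i = w ^+ j -> i = j) ->
  (size p <= M)%N -> (forall k, (k < M)%N -> p.[w ^+ k] = 0) -> p = 0.
Proof.
move=> inj sp hk.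
apply: (@roots_geq_poly_eq0 _ p (mkseq (fun k => w ^+ k) M)).
- apply/allP=> x /mapP [k]; rewrite mem_iota add0n => /andP [_ hkM] ->.
  by rewrite /root hk.
- rewrite map_inj_in_uniq ?iota_uniq // => i j; rewrite !mem_iota !add0n.
  by move=> /andP [_ hi] /andP [_ hj]; apply: inj.
- by rewrite size_mkseq.
Qed.
Lemma quad (R : comNzRingType) (X X' Y Y' : R) :
  X + X' = Y + Y' -> X * X' = Y * Y' -> (Y - X) * (Y - X') = 0.
Proof.
move=> h1 h2.
have e : X' = Y + Y' - X by rewrite -h1; ring.
rewrite e in h2 *.
have -> : (Y - X) * (Y - (Y + Y' - X)) = X * (Y + Y' - X) - Y * Y' by ring.
by rewrite h2 subrr.
Qed.

Lemma coefPv N v j : (Pv N v)`_j = if (j < N)%N then v j else 0.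
Proof. exact: coef_poly. Qed.

Lemma Pv_sub N a b lam :
  Pv N (fun j => b j - lam * a j) = Pv N b - lam *: Pv N a.
Proof.
apply/polyP=> j; rewrite coefB coefZ !coefPv; case: ifP=> _ //.
by rewrite mulr0 subr0.
Qed.

Lemma Pa_ne0_Ra N a : Pv N a != 0 -> Rv N a != 0.
Proof.
move=> h; apply/eqP=> /Rv_eq0 h2; move/eqP: h; apply; exact/Pv_eq0.
Qed.

Lemma lead_Pv_idx N v : Pv N v != 0 -> ((size (Pv N v)).-1 < N)%N /\
   lead_coef (Pv N v) = v (size (Pv N v)).-1.
Proof.
move=> h; have s0 : (0 < size (Pv N v))%N by rewrite size_poly_gt0.
have sN : (size (Pv N v) <= N)%N by apply: size_poly.
have hl : ((size (Pv N v)).-1 < N)%N by lia.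
by split=> //; rewrite lead_coefE coefPv hl.
Qed.

Lemma lam_norm N a b lam : (forall j, (j < N)%N -> b j = lam * a j) ->
  Pv N a != 0 -> Sv N a = Sv N b -> lam * cj lam = 1.
Proof.
move=> hb ha hS.
have e1 : Pv N b = lam *: Pv N a.
  by apply/polyP=> j; rewrite coefZ !coefPv; case: ifP=> [/hb //|_]; rewrite mulr0.
have e2 : Rv N b = cj lam *: Rv N a.
  apply/polyP=> j; rewrite coefZ /Rv !coef_poly; case: ifP=> [hj|_]; last by rewrite mulr0.
  by rewrite hb ?cjM //; lia.
move: hS; rewrite /Sv e1 e2 -scalerAl -scalerAr scalerA => /eqP.
rewrite -subr_eq0 -{1}(scale1r (Pv N a * Rv N a)) -scalerBl scaler_eq0.
rewrite mulf_eq0 (negbTE ha) (negbTE (Pa_ne0_Ra _ _ ha)) /= orbF subr_eq0 => /eqP <-.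
done.
Qed.
Arguments lead_Pv_idx {N v}.
Lemma Pv_zero_Sv N b : Sv N b = 0 -> forall j, (j < N)%N -> b j = 0.
Proof.
move/eqP; rewrite /Sv mulf_eq0 => /orP [/eqP/Pv_eq0 //|/eqP/Rv_eq0 //].
Qed.

Lemma case1 N w a b : (0 < N)%N -> w != 0 ->
  (forall i j, (i < 2*N-1)%N -> (j < 2*N-1)%N -> w^+i = w^+j -> i = j) ->
  Pv N a != 0 ->
  Pv N (wv w b) * Pv N a = Pv N (wv w a) * Pv N b ->
  exists lam, forall j, (j < N)%N -> b j = lam * a j.
Proof.
move=> N0 w0 inj ha hPP.
have [hdN hla] := lead_Pv_idx ha.
set hd := (size (Pv N a)).-1 in hdN hla.
have ahd : a hd != 0 by rewrite -hla lead_coef_eq0.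
exists (b hd / a hd).
set lam := b hd / a hd.
set c := fun j => b j - lam * a j.
have ePc : Pv N c = Pv N b - lam *: Pv N a by apply: Pv_sub.
have ePwc : Pv N (wv w c) = Pv N (wv w b) - lam *: Pv N (wv w a).
  apply/polyP=> j; rewrite coefB coefZ !coefPv; case: ifP=> _; last by rewrite mulr0 subr0.
  rewrite /wv /c; ring.
have hc : Pv N (wv w c) * Pv N a = Pv N (wv w a) * Pv N c.
  rewrite ePwc ePc mulrBl mulrBr hPP -scalerAl -scalerAr mulrC.
  done.
have : Pv N c = 0.
  apply/eqP; apply: contraT => hc0.
  have [hcN hlc] := lead_Pv_idx hc0.
  have ha' : lead_coef (Pv N a) != 0 by rewrite lead_coef_eq0.
  have hc0' : lead_coef (Pv N c) != 0 by rewrite lead_coef_eq0.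
  have := congr1 lead_coef hc; rewrite !lead_coefM !lead_Pw //.
  move=> E.
  have E2 : (lead_coef (Pv N a) * lead_coef (Pv N c)) * w ^+ (size (Pv N c)).-1
          = (lead_coef (Pv N a) * lead_coef (Pv N c)) * w ^+ (size (Pv N a)).-1.
    by rewrite -mulrA mulrC E mulrAC.
  move: E2 => /(mulfI _) eqi0.
  have /inj eqi := eqi0 (mulf_neq0 ha' hc0').

  have eqi' : (size (Pv N c)).-1 = hd by apply: eqi; lia.
  move: hlc; rewrite eqi' /c /lam divfK // subrr => /eqP.
  by rewrite lead_coef_eq0 (negbTE hc0).
move/Pv_eq0=> h j hj; move: (h j hj); rewrite /c => /eqP; rewrite subr_eq0 => /eqP //.
Qed.
Lemma case2 N w a b : (0 < N)%N -> w * cj w = 1 ->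
  (forall i j, (i < 2*N-1)%N -> (j < 2*N-1)%N -> w^+i = w^+j -> i = j) ->
  Pv N a != 0 -> Sv N a = Sv N b ->
  Pv N (wv w b) * Rv N b = Pv N a * Rv N (wv w a) ->
  exists lam, forall j, (j < N)%N -> b j = lam * a j.
Proof.
move=> N0 ww inj ha hS hY.
have w0 : w != 0 by apply/eqP=> w0; move: ww; rewrite w0 mul0r => /eqP; rewrite eq_sym oner_eq0.
have hRa := Pa_ne0_Ra _ _ ha.
have hSa : Sv N a != 0 by rewrite /Sv mulf_neq0.
have hb : Pv N b != 0 by apply/eqP=> hb0; move: hSa; rewrite hS /Sv hb0 mul0r eqxx.
have hRb := Pa_ne0_Ra _ _ hb.
have sPa : (0 < size (Pv N a))%N by rewrite size_poly_gt0.
have sPb : (0 < size (Pv N b))%N by rewrite size_poly_gt0.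
have sRa : (0 < size (Rv N a))%N by rewrite size_poly_gt0.
have sRb : (0 < size (Rv N b))%N by rewrite size_poly_gt0.
have sPaN : (size (Pv N a) <= N)%N by apply: size_poly.
have sPbN : (size (Pv N b) <= N)%N by apply: size_poly.
have sRaN : (size (Rv N a) <= N)%N by apply: size_poly.
have sRbN : (size (Rv N b) <= N)%N by apply: size_poly.
have hsz : (size (Pv N b) + size (Rv N b) = size (Pv N a) + size (Rv N a))%N.
  have := congr1 (fun p : {poly K} => size p) hS; rewrite /Sv !size_mul // -!subn1.
  have aux : forall x y u v : nat, (0 < x)%N -> (0 < y)%N -> (x + y - 1 = u + v - 1)%N -> (0 < u)%N -> (0 < v)%N -> (u + v = x + y)%N by move=> *; lia.
  by move/aux; apply.
have hld := congr1 lead_coef hS; rewrite /Sv !lead_coefM in hld.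
have := congr1 lead_coef hY; rewrite !lead_coefM lead_Pw // lead_Rw // => E.
set La := lead_coef (Pv N a) * lead_coef (Rv N a).
have La0 : La != 0 by rewrite mulf_neq0 // lead_coef_eq0.
have E2 : La * w ^+ (size (Pv N b)).-1 = La * cj w ^+ (N - size (Rv N a)).
  by rewrite {1}/La hld mulrAC E mulrA.
move/(mulfI La0): E2 => E3.
have E4 : w ^+ ((size (Pv N b)).-1 + (N - size (Rv N a))) = w ^+ 0.
  by rewrite exprD E3 -exprMn mulrC ww expr1n expr0.
have := inj _ _ _ _ E4 => E5.
have E6 : ((size (Pv N b)).-1 + (N - size (Rv N a)) = 0)%N by apply: E5; lia.
have szPa : size (Pv N a) = 1%N by lia.
have szPb : size (Pv N b) = 1%N by lia.
have a0 : a 0%N != 0.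
  have [_ h] := lead_Pv_idx ha; rewrite szPa /= in h; by rewrite -h lead_coef_eq0.
exists (b 0%N / a 0%N) => j hj.
case: j hj => [|j] hj; first by rewrite divfK.
have : (Pv N a)`_j.+1 = 0.
  by have /leq_sizeP := eq_leq szPa; apply.
have : (Pv N b)`_j.+1 = 0.
  by have /leq_sizeP := eq_leq szPb; apply.
rewrite !coefPv hj => -> ->; by rewrite mulr0.
Qed.
Arguments case1 {N w a b}. Arguments case2 {N w a b}. Arguments lam_norm {N a b lam}.
Lemma alg N w a b : (0 < N)%N -> w * cj w = 1 ->
  (forall i j, (i < 2*N-1)%N -> (j < 2*N-1)%N -> w^+i = w^+j -> i = j) ->
  Sv N a = Sv N b -> Sv N (wv w a) = Sv N (wv w b) -> Tv N w a = Tv N w b ->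
  exists lam, lam * cj lam = 1 /\ forall j, (j < N)%N -> b j = lam * a j.
Proof.
move=> N0 ww inj hS hSw hT.
have w0 : w != 0 by apply/eqP=> w0; move: ww; rewrite w0 mul0r => /eqP; rewrite eq_sym oner_eq0.
have [ha0|ha] := eqVneq (Pv N a) 0.
  have hb0 : Sv N b = 0 by rewrite -hS /Sv ha0 mul0r.
  exists 1; split; first by rewrite /cj rmorph1 mulr1.
  move=> j hj; rewrite (Pv_zero_Sv _ _ hb0) //.
  by move/Pv_eq0: ha0 => ->; rewrite ?mulr0.
have hRa := Pa_ne0_Ra _ _ ha.
have hSa : Sv N a != 0 by rewrite /Sv mulf_neq0.
have hb : Pv N b != 0 by apply/eqP=> hb0; move: hSa; rewrite hS /Sv hb0 mul0r eqxx.
have hRb := Pa_ne0_Ra _ _ hb.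
suff [lam hl] : exists lam, forall j, (j < N)%N -> b j = lam * a j.
  by exists lam; split=> //; apply: lam_norm hl ha hS.
have hq := @quad _ (Pv N (wv w a) * Rv N a) (Pv N a * Rv N (wv w a))
                   (Pv N (wv w b) * Rv N b) (Pv N b * Rv N (wv w b)).
have := hq hT.
have e1 : forall v, Pv N (wv w v) * Rv N v * (Pv N v * Rv N (wv w v)) = Sv N (wv w v) * Sv N v.
  by move=> v; rewrite /Sv; ring.
rewrite !e1 hS hSw => /(_ erefl) /eqP; rewrite mulf_eq0 !subr_eq0 => /orP [] /eqP hY.
  apply: (case1 N0 w0 inj ha).
  have: Rv N a * Rv N b * (Pv N (wv w b) * Pv N a - Pv N (wv w a) * Pv N b) = 0.
    have -> : Rv N a * Rv N b * (Pv N (wv w b) * Pv N a - Pv N (wv w a) * Pv N b)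
          = (Pv N (wv w b) * Rv N b) * Sv N a - (Pv N (wv w a) * Rv N a) * Sv N b.
      by rewrite /Sv; ring.
    by rewrite hY hS subrr.
  move/eqP; rewrite !mulf_eq0 (negbTE hRa) (negbTE hRb) /= subr_eq0 => /eqP //.
exact: (case2 N0 ww inj ha hS hY).
Qed.
Definition c2m (z : C) : K := Complex (fst z) (snd z).
Lemma c2mD x y : c2m (Cplus x y) = c2m x + c2m y.
Proof. by case: x; case: y. Qed.
Lemma c2mM x y : c2m (Cmult x y) = c2m x * c2m y.
Proof. by case: x=> a b; case: y=> c d. Qed.
Lemma c2mB x y : c2m (Cminus x y) = c2m x - c2m y.
Proof. by case: x; case: y. Qed.
Lemma c2m_inj x y : c2m x = c2m y -> x = y.
Proof. by case: x=> a b; case: y=> c d; rewrite /c2m /= => -[-> ->]. Qed.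
Lemma c2m_sum n f : c2m (csum n f) = \sum_(j < n) c2m (f j).
Proof.
elim: n => [|n IH]; first by rewrite big_ord0.
by rewrite /= c2mD IH big_ord_recr.
Qed.

Definition ce t := c2m (cexp2pi t).
Lemma ceD s t : ce (s + t) = ce s * ce t.
Proof. by rewrite /ce cexp_add c2mM. Qed.
Lemma ceN n t : ce (INR n * t) = ce t ^+ n.
Proof.
elim: n => [|n IH].
  rewrite /= expr0 /ce Rmult_0_l /cexp2pi Rmult_0_r cos_0 sin_0 //.
rewrite S_INR Rmult_plus_distr_r Rmult_1_l ceD IH exprSr //.
Qed.
Lemma ce_cj t : ce t * cj (ce t) = 1.
Proof.
rewrite /ce /c2m /cj /=. apply/eqP; rewrite eq_complex /=; apply/andP; split; apply/eqP.
  exact: (cexp_norm t).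
Show. by ring.
Qed.
Definition om N := ce (/ INR (2 * N - 1)).
Lemma om_pow N k : om N ^+ k = ce (INR k * / INR (2 * N - 1)).
Proof. by rewrite ceN. Qed.
Lemma om_cj N : om N * cj (om N) = 1.
Proof. exact: ce_cj. Qed.
Lemma om_ne0 N : om N != 0.
Proof. by apply/eqP=> h; have := om_cj N; rewrite h mul0r => /eqP; rewrite eq_sym oner_eq0. Qed.
Lemma om_M N : (0 < N)%N -> om N ^+ (2 * N - 1) = 1.
Proof.
move=> N0; rewrite om_pow Rinv_r; first by rewrite /ce cexp_one.
apply: not_0_INR; lia.
Qed.
Lemma om_one N d : (0 < N)%N -> (0 < d)%N -> (d < 2 * N - 1)%N -> om N ^+ d != 1.
Proof.
move=> N0 d0 dM; apply/eqP; rewrite om_pow => h.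
have := congr1 (@complex.Im _) h; rewrite /ce /c2m /=.
move=> hs; apply: (@sin_ne0 N d); [apply/leP; lia | apply/ltP; lia | apply/ltP; lia | exact: hs].
Qed.
Lemma om_inj N : (0 < N)%N -> forall i j, (i < 2*N-1)%N -> (j < 2*N-1)%N ->
  om N ^+ i = om N ^+ j -> i = j.
Proof.
move=> N0.
suff H : forall i j, (i < j)%N -> (j < 2*N-1)%N -> om N ^+ i = om N ^+ j -> False.
  move=> i j hi hj e; case: (ltngtP i j) => // h.
    by case: (H i j h hj e).
  by case: (H j i h hi (esym e)).
move=> i j hij hj e.
have : om N ^+ (j - i) = 1.
  apply: (mulfI (expf_neq0 i (om_ne0 N))); rewrite -exprD mulr1 subnKC ?e //; lia.
by apply/eqP; apply: om_one => //; lia.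
Qed.
Lemma Ptrig_val N v k : c2m (Ptrig N v (Rdiv (INR k) (INR (2 * N - 1))))
   = (Pv N (fun j => c2m (v j))).[om N ^+ k].
Proof.
rewrite /Ptrig c2m_sum /Pv horner_poly; apply: eq_bigr => j _; rewrite c2mM; congr (_ * _).
by rewrite -exprM om_pow /ce real_arith.
Qed.

Lemma Cmod_eqK z1 z2 : Cmod z1 = Cmod z2 -> c2m z1 * cj (c2m z1) = c2m z2 * cj (c2m z2).
Proof.
move=> /Cmod_sq h; case: z1 h => a b; case: z2 => c d /= h.
rewrite /c2m /cj /=; apply/eqP; rewrite eq_complex /=; apply/andP; split; apply/eqP.
  exact: h.
by rewrite /=; ring.
Qed.
Definition nrm (x : K) := x * cj x.

Lemma omk_cj N k : om N ^+ k * cj (om N ^+ k) = 1.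
Proof. by rewrite cjX -exprMn om_cj expr1n. Qed.

Lemma size_mulN N (p q : {poly K}) : (size p <= N)%N -> (size q <= N)%N ->
  (size (p * q)%R <= 2 * N - 1)%N.
Proof.
move=> h1 h2; apply: (leq_trans (size_mul_leq p q)).
have aux : forall x y : nat, (x <= N)%N -> (y <= N)%N -> ((x + y).-1 <= 2 * N - 1)%N by move=> x y; lia.
exact: aux.
Qed.

Lemma size_S N v : (size (Sv N v) <= 2 * N - 1)%N.
Proof. by apply: size_mulN; apply: size_poly. Qed.

Lemma size_T N w v : (size (Tv N w v) <= 2 * N - 1)%N.
Proof.
rewrite /Tv; apply: (leq_trans (size_add _ _)); rewrite geq_max.
by apply/andP; split; apply: size_mulN; apply: size_poly.
Qed.

Lemma Sv_val N v z : z * cj z = 1 -> (Sv N v).[z] = z ^+ N.-1 * nrm ((Pv N v).[z]).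
Proof. by move=> hz; rewrite /Sv hornerM hornerR // /nrm mulrCA. Qed.

Lemma Tv_val N w v z : z * cj z = 1 -> (Tv N w v).[z] =
   z ^+ N.-1 * ((Pv N v).[w * z] * cj ((Pv N v).[z]) + (Pv N v).[z] * cj ((Pv N v).[w * z])).
Proof.
move=> hz; rewrite /Tv hornerD !hornerM !hornerR // hornerPw; ring.
Qed.

Lemma key N A B : (0 < N)%N ->
  (forall k, (k < 2 * N - 1)%N -> nrm ((Pv N A).[om N ^+ k]) = nrm ((Pv N B).[om N ^+ k])) ->
  (forall k, (k < 2 * N - 1)%N -> nrm ((Pv N A).[om N ^+ k.+1] - (Pv N A).[om N ^+ k])
                           = nrm ((Pv N B).[om N ^+ k.+1] - (Pv N B).[om N ^+ k])) ->
  [/\ Sv N A = Sv N B, Sv N (wv (om N) A) = Sv N (wv (om N) B) & Tv N (om N) A = Tv N (om N) B].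
Proof.
move=> N0 h1 h2.
have h1' : forall k, (k < 2 * N)%N -> nrm ((Pv N A).[om N ^+ k]) = nrm ((Pv N B).[om N ^+ k]).
  move=> k hk; have [hk'|hk'] := ltnP k (2 * N - 1); first exact: h1.
  have -> : k = (2 * N - 1)%N by lia.
  rewrite om_M //; rewrite -(expr0 (om N)); apply: h1; lia.
have inj := om_inj N N0.
split.
- apply/eqP; rewrite -subr_eq0; apply/eqP; apply: (@interp (2 * N - 1) (om N)) => //.
    apply: (leq_trans (size_add _ _)); rewrite size_opp geq_max !size_S //.
  by move=> k hk; rewrite hornerD hornerN !Sv_val ?omk_cj // h1 // subrr.
- apply/eqP; rewrite -subr_eq0; apply/eqP; apply: (@interp (2 * N - 1) (om N)) => //.
    apply: (leq_trans (size_add _ _)); rewrite size_opp geq_max !size_S //.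
  move=> k hk; rewrite hornerD hornerN !Sv_val ?omk_cj // !hornerPw -exprS h1' ?subrr //; lia.
- apply/eqP; rewrite -subr_eq0; apply/eqP; apply: (@interp (2 * N - 1) (om N)) => //.
    apply: (leq_trans (size_add _ _)); rewrite size_opp geq_max !size_T //.
  move=> k hk; rewrite hornerD hornerN !Tv_val ?omk_cj // -exprS.
  have e : forall u u' : K, u' * cj u + u * cj u' = nrm u' + nrm u - nrm (u' - u).
    by move=> u u'; rewrite /nrm cjB; ring.
  rewrite !e h2 // !h1' ?subrr //; lia.
Qed.

Lemma bridge1 N phi psi : (0 < N)%N ->
  (forall k : nat, (le k (2 * N - 2)%nat) ->
     Cmod (Ptrig N phi (Rdiv (INR k) (INR (2 * N - 1))))
     = Cmod (Ptrig N psi (Rdiv (INR k) (INR (2 * N - 1))))) ->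
  forall k, (k < 2 * N - 1)%N ->
    nrm (Pv N (fun j => c2m (phi j))).[om N ^+ k] = nrm (Pv N (fun j => c2m (psi j))).[om N ^+ k].
Proof.
move=> N0 H2 k hk; rewrite -(Ptrig_val N phi k) -(Ptrig_val N psi k).
apply: Cmod_eqK; apply: H2; apply/leP; lia.
Qed.

Lemma bridge2 N phi psi : (0 < N)%N ->
  (forall k : nat, (le k (2 * N - 2)%nat) ->
     Cmod (Cminus (Ptrig N phi (Rdiv (INR (k + 1)) (INR (2 * N - 1))))
                  (Ptrig N phi (Rdiv (INR k) (INR (2 * N - 1)))))
     = Cmod (Cminus (Ptrig N psi (Rdiv (INR (k + 1)) (INR (2 * N - 1))))
                    (Ptrig N psi (Rdiv (INR k) (INR (2 * N - 1)))))) ->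
  forall k, (k < 2 * N - 1)%N ->
    nrm ((Pv N (fun j => c2m (phi j))).[om N ^+ k.+1] - (Pv N (fun j => c2m (phi j))).[om N ^+ k])
  = nrm ((Pv N (fun j => c2m (psi j))).[om N ^+ k.+1] - (Pv N (fun j => c2m (psi j))).[om N ^+ k]).
Proof.
move=> N0 H3 k hk; rewrite -(Ptrig_val N phi k) -(Ptrig_val N psi k).
rewrite -(Ptrig_val N phi k.+1) -(Ptrig_val N psi k.+1) -!c2mB.
apply: Cmod_eqK; have h : le k (2 * N - 2)%nat by apply/leP; lia.
have := H3 k h; rewrite addn1; exact.
Qed.

Local Open Scope R_scope.

Theorem mainTheorem13 (N : nat) (phi psi : nat -> C) :
  (le 1 N) ->
  (forall k : nat, (le k (2 * N - 2)%nat) ->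
     Cmod (Ptrig N phi (INR k / INR (2 * N - 1)))
     = Cmod (Ptrig N psi (INR k / INR (2 * N - 1)))) ->
  (forall k : nat, (le k (2 * N - 2)%nat) ->
     Cmod (Cminus (Ptrig N phi (INR (k + 1) / INR (2 * N - 1)))
                  (Ptrig N phi (INR k / INR (2 * N - 1))))
     = Cmod (Cminus (Ptrig N psi (INR (k + 1) / INR (2 * N - 1)))
                    (Ptrig N psi (INR k / INR (2 * N - 1))))) ->
  exists lambda : C, Cmod lambda = 1 /\
    forall j : nat, (lt j N) -> psi j = Cmult lambda (phi j).
Proof.
move=> H1 H2 H3.
have N0 : (0 < N)%N by apply/ltP.
have K1 := bridge1 N phi psi N0 H2.
have K2 := bridge2 N phi psi N0 H3.
have [hS hSw hT] := key N _ _ N0 K1 K2.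
have [lam [hl hb]] := alg N (om N) _ _ N0 (om_cj N) (om_inj N N0) hS hSw hT.
exists (complex.Re lam, complex.Im lam); split.
  apply: Cmod_one; have := congr1 (@complex.Re _) hl; case: lam {hl hb} => a b /=; exact.
move=> j hj; apply: c2m_inj; rewrite c2mM hb; last by apply/ltP.
by case: lam {hl hb}.
Qed.
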